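(* Let $\mathbf A$ be an algebra of type $\tau$ equipped with a partition system $\sigma\mapsto\langle\odot^\sigma_0,\dots,\odot^\sigma_n\rangle$. Let $\equiv$ be the common equivalence relation $\equiv_\odot$ of the left normal bands in the system, let $I\subseteq A$ be a set of representatives of its classes, made into a join-semilattice $\mathbf I=\langle I,\vee\rangle$ by letting $p\vee q$ be the representative of the class of $p\odot q$ (for any $\odot$ of the system), with order $\preceq$, and let $A_p$ denote the class of $p$. Then: (1) each $A_p$ is closed under all operations of $\mathbf A$ of positive arity, and becomes an algebra $\mathbf A_p$ of type $\tau$ by setting $\omega^{\mathbf A_p}:=\omega^{\mathbf A}\odot^\omega_0 p$ for each constant symbol $\omega$; (2) for all $p\preceq q$ in $\mathbf I$ the assignment $\xi_{pq}$ with $\xi^{\sigma i}_{pq}(a):=a\odot^\sigma_i q$ (for each $n$-ary $\sigma$ and $0\le i\le n$, $a\in A_p$) is a well-defined metamorphism $\mathbf A_p\Rightarrow\mathbf A_q$; (3) $\{\xi_{pq}: p\preceq q\}$ is a semilattice directed system of metamorphisms and $\mathbf A$ is its Płonka sum.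
   Context: A left normal band on a set $A$ is a binary operation $\odot$ with $a\odot a=a$, $a\odot(b\odot c)=(a\odot b)\odot c$, $a\odot(b\odot c)=a\odot(c\odot b)$ for all $a,b,c$. Put $a\preceq_\odot b\iff b\odot a=b$ and $a\equiv_\odot b\iff a\preceq_\odot b$ and $b\preceq_\odot a$; then $\preceq_\odot$ is a preorder, $\equiv_\odot$ a congruence, and the quotient is a join-semilattice. Two left normal bands $\odot,\otimes$ on $A$ are homotactic if $\preceq_\odot=\preceq_\otimes$. For an algebra $\mathbf A$ of type $\tau$, a partition system is an assignment to each $n$-ary operation symbol $\sigma$ (constants: $n=0$) of a tuple $\langle\odot^\sigma_0,\dots,\odot^\sigma_n\rangle$ of left normal bands on $A$, all of them (over all $\sigma$) pairwise homotactic, such that for all $a_1,\dots,a_n,b\in A$: (PF4$^\sigma$) if $n\ge1$, $\sigma^{\mathbf A}(a_1,\dots,a_n)\odot^\sigma_0 b=\sigma^{\mathbf A}(a_1\odot^\sigma_1 b,\dots,a_n\odot^\sigma_n b)$; (PF5$^\sigma$) $b\odot^\sigma_0\sigma^{\mathbf A}(a_1,\dots,a_n)=b\odot^\sigma_0a_1\odot^\sigma_0\cdots\odot^\sigma_0a_n$ (for a constant $\omega$: $b\odot^\omega_0\omega^{\mathbf A}=b$). A metamorphism $f:\mathbf A\Rightarrow\mathbf B$ between algebras of type $\tau$ assigns to each $n$-ary symbol $\sigma$ a tuple of maps $f^{\sigma0},\dots,f^{\sigma n}:A\to B$ such that $f^{\sigma0}(\sigma^{\mathbf A}(a_1,\dots,a_n))=\sigma^{\mathbf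 B}(f^{\sigma1}(a_1),\dots,f^{\sigma n}(a_n))$ (for constants $f^{\omega0}(\omega^{\mathbf A})=\omega^{\mathbf B}$); composition and identities are componentwise. A semilattice directed system of metamorphisms over a join-semilattice $\mathbf I$ is a family of pairwise disjoint algebras $\mathbf A_p$ ($p\in I$) with metamorphisms $\xi_{pq}:\mathbf A_p\Rightarrow\mathbf A_q$ for $p\preceq q$ such that $\xi_{pp}$ is the identity and $\xi_{qr}\circ\xi_{pq}=\xi_{pr}$. Its Płonka sum is the algebra on $\biguplus_pA_p$ with $\sigma(a_1,\dots,a_n):=\sigma^{\mathbf A_q}(\xi^{\sigma1}_{p_1q}(a_1),\dots,\xi^{\sigma n}_{p_nq}(a_n))$ for $a_i\in A_{p_i}$, $q=p_1\vee\dots\vee p_n$, and (if $\tau$ has constants, $\mathbf I$ must have a least element $\bot$) $\omega:=\omega^{\mathbf A_\bot}$. *)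

(* Defs.v *)
From mathcomp Require Import all_boot.
Set Implicit Arguments. Unset Strict Implicit. Unset Printing Implicit Defensive.

Record signature := Signature { sym : Type; arity : sym -> nat }.

(* Operations of an algebra of type tau on carrier T;
   arguments of an n-ary symbol are indexed by 'I_n (i.e. a_1..a_n = a 0..a (n-1)). *)
Definition ops (tau : signature) (T : Type) :=
  forall s : sym tau, ('I_(arity s) -> T) -> T.

Definition left_normal_band (A : Type) (m : A -> A -> A) :=
  [/\ forall a, m a a = a,
      forall a b c, m a (m b c) = m (m a b) c
    & forall a b c, m a (m b c) = m a (m c b)].

Definition lnb_le (A : Type) (m : A -> A -> A) (a b : A) := m b a = b.
Definition lnb_equiv (A : Type) (m : A -> A -> A) (a b : A) :=
  lnb_le m a b /\ lnb_le m b a.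
Definition homotactic (A : Type) (m1 m2 : A -> A -> A) :=
  forall a b, lnb_le m1 a b <-> lnb_le m2 a b.

(* A tuple of bands <odot^s_0,...,odot^s_n> for each n-ary symbol s,
   with odot^s_i = ps s i, i : 'I_(n+1). *)
Definition band_system (tau : signature) (A : Type) :=
  forall s : sym tau, 'I_(arity s).+1 -> A -> A -> A.

Definition partition_system (tau : signature) (A : Type) (op : ops tau A)
    (ps : band_system tau A) :=
  [/\ forall s i, left_normal_band (ps s i),
      forall s i s' i', homotactic (ps s i) (ps s' i'),
      forall s (a : 'I_(arity s) -> A) b, 0 < arity s ->
        ps s ord0 (op s a) b = op s (fun i => ps s (lift ord0 i) (a i) b)
    &
      forall s (a : 'I_(arity s) -> A) b,
        ps s ord0 b (op s a) = foldl (ps s ord0) b [seq a i | i <- enum 'I_(arity s)]].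

Definition sys_equiv (tau : signature) (A : Type) (ps : band_system tau A) (a b : A) :=
  forall s i, lnb_equiv (ps s i) a b.

Definition metamorphism (tau : signature) (TA TB : Type) (opA : ops tau TA)
    (opB : ops tau TB) (f : forall s : sym tau, 'I_(arity s).+1 -> TA -> TB) :=
  forall s (a : 'I_(arity s) -> TA),
    f s ord0 (opA s a) = opB s (fun i => f s (lift ord0 i) (a i)).

Definition join_semilattice (I : Type) (j : I -> I -> I) :=
  [/\ forall p, j p p = p, forall p q, j p q = j q p
    & forall p q r, j p (j q r) = j (j p q) r].
Definition sl_le (I : Type) (j : I -> I -> I) (p q : I) := j p q = q.

(* The maps xi p q
   are only required to be meaningful when p <= q (their values for other
   pairs are irrelevant).  Disjointness of the A_p is built in by using the
   dependent sum {p : I & Ap p} as their disjoint union. *)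
Definition directed_system (tau : signature) (I : Type) (j : I -> I -> I)
    (Ap : I -> Type) (opp : forall p, ops tau (Ap p))
    (xi : forall p q (s : sym tau), 'I_(arity s).+1 -> Ap p -> Ap q) :=
  [/\ join_semilattice j,
      forall p q, sl_le j p q -> metamorphism (opp p) (opp q) (xi p q),
      forall p s i a, xi p p s i a = a
    & forall p q r s i a, sl_le j p q -> sl_le j q r ->
        xi q r s i (xi p q s i a) = xi p r s i a].

Definition plonka_sum (tau : signature) (I : Type) (j : I -> I -> I)
    (Ap : I -> Type) (opp : forall p, ops tau (Ap p))
    (xi : forall p q (s : sym tau), 'I_(arity s).+1 -> Ap p -> Ap q)
    (opS : ops tau {p : I & Ap p}) :=
  (forall s (a : 'I_(arity s) -> {p : I & Ap p}) p0 rest,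
     [seq tag (a i) | i <- enum 'I_(arity s)] = p0 :: rest ->
     opS s a = existT Ap (foldl j p0 rest)
       (opp (foldl j p0 rest) s
          (fun i => xi (tag (a i)) (foldl j p0 rest) s (lift ord0 i) (tagged (a i)))))
  /\
  (forall s, arity s = 0 ->
     exists bot : I, (forall p, sl_le j bot p) /\
       forall a : 'I_(arity s) -> {p : I & Ap p},
         opS s a = existT Ap bot
           (opp bot s (fun i => xi (tag (a i)) bot s (lift ord0 i) (tagged (a i))))).

Definition rep_type (A : Type) (Ip : A -> Prop) := {p : A | Ip p}.
Definition block (tau : signature) (A : Type) (ps : band_system tau A)
    (Ip : A -> Prop) (p : rep_type Ip) := {a : A | sys_equiv ps a (sval p)}.

(* Main.v *)
Require Import Defs.
From mathcomp Require Import all_boot.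
From Stdlib Require Import ClassicalEpsilon ProofIrrelevance FunctionalExtensionality Classical.
Unset Implicit Arguments.

Lemma lnb_idem {A : Type} {m : A -> A -> A} : left_normal_band m -> forall a, m a a = a.
Proof. by case. Qed.
Lemma lnb_assoc {A : Type} {m : A -> A -> A} : left_normal_band m ->
  forall a b c, m a (m b c) = m (m a b) c.
Proof. by case. Qed.
Lemma lnb_norm {A : Type} {m : A -> A -> A} : left_normal_band m ->
  forall a b c, m a (m b c) = m a (m c b).
Proof. by case. Qed.

Lemma le_refl {A} {m : A -> A -> A} (H : left_normal_band m) {a} : lnb_le m a a.
Proof. exact: lnb_idem H a. Qed.

Lemma le_trans {A} {m : A -> A -> A} (H : left_normal_band m) {a b c} :
  lnb_le m a b -> lnb_le m b c -> lnb_le m a c.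
Proof. rewrite /lnb_le => Hab Hbc. by rewrite -{1}Hbc -(lnb_assoc H) Hab Hbc. Qed.

Lemma le_l {A} {m : A -> A -> A} (H : left_normal_band m) {a b} : lnb_le m a (m a b).
Proof. by rewrite /lnb_le -(lnb_assoc H) (lnb_norm H) (lnb_assoc H) (lnb_idem H). Qed.

Lemma le_r {A} {m : A -> A -> A} (H : left_normal_band m) {a b} : lnb_le m b (m a b).
Proof. by rewrite /lnb_le -(lnb_assoc H) (lnb_idem H). Qed.

Lemma le_lub {A} {m : A -> A -> A} (H : left_normal_band m) {a b c} :
  lnb_le m a c -> lnb_le m b c -> lnb_le m (m a b) c.
Proof. rewrite /lnb_le => Hac Hbc. by rewrite (lnb_assoc H) Hac Hbc. Qed.

Lemma eq_right {A} {m : A -> A -> A} (H : left_normal_band m) x y y' :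
  lnb_le m y y' -> lnb_le m y' y -> m x y = m x y'.
Proof. rewrite /lnb_le => H1 H2. by rewrite -{1}H2 (lnb_norm H) H1. Qed.

Fixpoint Pall {X} (P : X -> Prop) (l : seq X) : Prop :=
  if l is x :: l' then P x /\ Pall P l' else True.

Lemma Pall_map {T : eqType} {X} (f : T -> X) P (s : seq T) :
  Pall P [seq f i | i <- s] <-> forall i, i \in s -> P (f i).
Proof.
elim: s => [|x s IH] /=; first by split.
split.
- case=> Hx /IH Hs i; rewrite in_cons => /orP [/eqP -> //| Hi]; exact: Hs.
- move=> H; split; first by apply: H; rewrite in_cons eqxx.
  apply/IH => i Hi; apply: H; by rewrite in_cons Hi orbT.
Qed.

Lemma foldl_lub {A} {m : A -> A -> A} (H : left_normal_band m) b l z :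
  lnb_le m (foldl m b l) z <-> lnb_le m b z /\ Pall (fun x => lnb_le m x z) l.
Proof.
elim: l b => [|x l IH] b /=; first by tauto.
split.
- move/IH => [Hbx Hl]; split; [|split].
  + apply: (le_trans H _ Hbx); exact: le_l.
  + apply: (le_trans H _ Hbx); exact: le_r.
  + exact Hl.
- move=> [Hb [Hx Hl]]; apply/IH; split => //; exact: le_lub.
Qed.

Lemma foldl_absorb {A} (m : A -> A -> A) z l :
  Pall (fun x => m z x = z) l -> foldl m z l = z.
Proof. elim: l => //= x l IH [Hx Hl]; rewrite Hx; exact: IH. Qed.

Lemma ord_empty {n} (i : 'I_n) : n = 0 -> False.
Proof. case: i => k Hk e; by rewrite e in Hk. Qed.

Definition LE {tau A} (ps : band_system tau A) a b := forall s i, lnb_le (ps s i) a b.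


Lemma bandP {tau A} {op : ops tau A} {ps} (Hps : partition_system op ps) s i :
  left_normal_band (ps s i).
Proof. by case: Hps. Qed.

Lemma LE_of {tau A} {op : ops tau A} {ps} (Hps : partition_system op ps) {s i a b} :
  lnb_le (ps s i) a b -> LE ps a b.
Proof. move=> H s' i'; case: Hps => _ Hh _ _; exact: (proj1 (Hh s i s' i' a b) H). Qed.

Lemma LE_refl {tau A} {op : ops tau A} {ps} (Hps : partition_system op ps) a : LE ps a a.
Proof. move=> s i; exact (le_refl (bandP Hps s i)). Qed.

Lemma LE_trans {tau A} {op : ops tau A} {ps} (Hps : partition_system op ps) {a b c} :
  LE ps a b -> LE ps b c -> LE ps a c.
Proof. move=> H1 H2 s i; exact (le_trans (bandP Hps s i) (H1 s i) (H2 s i)). Qed.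

Lemma ps_ub_l {tau A} {op : ops tau A} {ps} (Hps : partition_system op ps) s i x y :
  LE ps x (ps s i x y).
Proof. exact (LE_of Hps (le_l (bandP Hps s i) (a:=x) (b:=y))). Qed.
Lemma ps_ub_r {tau A} {op : ops tau A} {ps} (Hps : partition_system op ps) s i x y :
  LE ps y (ps s i x y).
Proof. exact (LE_of Hps (le_r (bandP Hps s i) (a:=x) (b:=y))). Qed.
Lemma ps_lub {tau A} {op : ops tau A} {ps} (Hps : partition_system op ps) s i x y z :
  LE ps x z -> LE ps y z -> LE ps (ps s i x y) z.
Proof. move=> Hx Hy; exact (LE_of Hps (le_lub (bandP Hps s i) (Hx s i) (Hy s i))). Qed.

Lemma E_LE1 {tau A} {ps : band_system tau A} {a b} : sys_equiv ps a b -> LE ps a b.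
Proof. by move=> H s i; case: (H s i). Qed.
Lemma E_LE2 {tau A} {ps : band_system tau A} {a b} : sys_equiv ps a b -> LE ps b a.
Proof. by move=> H s i; case: (H s i). Qed.
Lemma LE_E {tau A} {ps : band_system tau A} {a b} : LE ps a b -> LE ps b a -> sys_equiv ps a b.
Proof. by move=> H1 H2 s i; split; [apply: H1 | apply: H2]. Qed.

Lemma op_ub {tau A} {op : ops tau A} {ps} (Hps : partition_system op ps) s a i :
  LE ps (a i) (op s a).
Proof.
have Hm := bandP Hps s ord0.
have [_ _ _ H5] := Hps.
have E5 := H5 s a (op s a). rewrite (lnb_idem Hm) in E5.
apply: (LE_of Hps (s:=s) (i:=ord0)).
have := (proj1 (foldl_lub Hm (op s a) [seq a i | i <- enum 'I_(arity s)] (op s a))).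
rewrite -E5 => /(_ (le_refl Hm)) [_ /Pall_map H]. apply: H. by rewrite mem_enum.
Qed.

Lemma op_lub {tau A} {op : ops tau A} {ps} (Hps : partition_system op ps) s a z :
  (forall i, LE ps (a i) z) -> LE ps (op s a) z.
Proof.
move=> H. apply: (LE_of Hps (s:=s) (i:=ord0)).
have [_ _ _ H5] := Hps.
rewrite /lnb_le H5. apply: foldl_absorb. apply/Pall_map => i _. exact: H i s ord0.
Qed.

Theorem theorem4p5 (tau : signature) (A : Type) (op : ops tau A)
    (ps : band_system tau A) (Hps : partition_system op ps)
    (Ip : A -> Prop)
    (HI : forall a : A, exists! p : A, Ip p /\ sys_equiv ps p a) :
  exists j : rep_type Ip -> rep_type Ip -> rep_type Ip,
    (forall p q s i, sys_equiv ps (sval (j p q)) (ps s i (sval p) (sval q))) /\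
    exists opp : forall p : rep_type Ip, ops tau (block ps p),
      (forall p s (a : 'I_(arity s) -> block ps p), 0 < arity s ->
         sval (opp p s a) = op s (fun i => sval (a i))) /\
      (forall p s (a : 'I_(arity s) -> block ps p), arity s = 0 ->
         sval (opp p s a) = ps s ord0 (op s (fun i => sval (a i))) (sval p)) /\
    exists xi : forall (p q : rep_type Ip) (s : sym tau),
                  'I_(arity s).+1 -> block ps p -> block ps q,
      (forall p q s i (a : block ps p), sl_le j p q ->
         sval (xi p q s i a) = ps s i (sval a) (sval q)) /\
      (forall p q, sl_le j p q -> metamorphism (opp p) (opp q) (xi p q)) /\
      directed_system j opp xi /\
      exists opS : ops tau {p : rep_type Ip & block ps p},
        plonka_sum j opp xi opS /\
        exists h : A -> {p : rep_type Ip & block ps p},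
          bijective h /\ (forall a, sval (tagged (h a)) = a) /\
          (forall s (a : 'I_(arity s) -> A), h (op s a) = opS s (fun i => h (a i))).
Proof.
have Hband := bandP Hps.
have Erefl : forall a, sys_equiv ps a a.
  by move=> a; apply: LE_E; exact (LE_refl Hps _).
have Esym : forall a b, sys_equiv ps a b -> sys_equiv ps b a.
  by move=> a b H; apply: LE_E; [exact (E_LE2 H) | exact (E_LE1 H)].
have Etrans : forall a b c, sys_equiv ps a b -> sys_equiv ps b c -> sys_equiv ps a c.
  move=> a b c H1 H2; apply: LE_E.
  - exact (LE_trans Hps (E_LE1 H1) (E_LE1 H2)).
  - exact (LE_trans Hps (E_LE2 H2) (E_LE2 H1)).
have repex : forall a, {p : rep_type Ip | sys_equiv ps (sval p) a}.
  move=> a; apply: constructive_indefinite_description.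
  case: (HI a) => x [[Ix Ex] _]. by exists (exist _ x Ix).
pose rep a := sval (repex a).
have rep_spec : forall a, sys_equiv ps (sval (rep a)) a := fun a => svalP (repex a).
have uniq : forall p q : rep_type Ip, sys_equiv ps (sval p) (sval q) -> p = q.
  move=> [p Hp] [q Hq] /= Hpq. case: (HI q) => x [_ Hu].
  have e1 := Hu p (conj Hp Hpq). have e2 := Hu q (conj Hq (Erefl q)).
  move: Hp Hq; rewrite -e1 -e2 => Hp Hq. by rewrite (proof_irrelevance _ Hp Hq).
have jex : forall p q : rep_type Ip, {r : rep_type Ip |
    forall s i, sys_equiv ps (sval r) (ps s i (sval p) (sval q))}.
  move=> p q; apply: constructive_indefinite_description.
  case: (classic (exists s : sym tau, True)) => [[s0 _]|Hno].
  - exists (rep (ps s0 ord0 (sval p) (sval q))) => s i.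
    apply: Etrans (rep_spec _) _. apply: LE_E.
    + eapply (ps_lub Hps); [exact (ps_ub_l Hps _ _ _ _) | exact (ps_ub_r Hps _ _ _ _)].
    + eapply (ps_lub Hps); [exact (ps_ub_l Hps _ _ _ _) | exact (ps_ub_r Hps _ _ _ _)].
  - exists p => s; exfalso; apply: Hno; by exists s.
pose j p q := sval (jex p q).
have jspec : forall p q s i, sys_equiv ps (sval (j p q)) (ps s i (sval p) (sval q)) :=
  fun p q => svalP (jex p q).
have jub_l : forall p q, LE ps (sval p) (sval (j p q)).
  move=> p q s i. exact (LE_trans Hps (ps_ub_l Hps s i _ (sval q)) (E_LE2 (jspec p q s i)) s i).
have jub_r : forall p q, LE ps (sval q) (sval (j p q)).
  move=> p q s i. exact (LE_trans Hps (ps_ub_r Hps s i (sval p) _) (E_LE2 (jspec p q s i)) s i).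
have jlub : forall p q z, LE ps (sval p) z -> LE ps (sval q) z -> LE ps (sval (j p q)) z.
  move=> p q z Hp Hq s i. exact (LE_trans Hps (E_LE1 (jspec p q s i)) (ps_lub Hps s i _ _ _ Hp Hq) s i).
have slLE1 : forall p q, sl_le j p q -> LE ps (sval p) (sval q).
  move=> p q H; rewrite -H; exact (jub_l _ _).
have slLE2 : forall p q, LE ps (sval p) (sval q) -> sl_le j p q.
  move=> p q H; apply: uniq; apply: LE_E.
  - apply jlub => //; exact (LE_refl Hps _).
  - exact (jub_r _ _).
have joinsl : join_semilattice j.
  split.
  - move=> p; apply: uniq; apply: LE_E.
    + apply jlub; exact (LE_refl Hps _).
    + exact (jub_l _ _).
  - move=> p q; apply: uniq; apply: LE_E; apply jlub; [exact (jub_r _ _)|exact (jub_l _ _)|exact (jub_r _ _)|exact (jub_l _ _)].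
  - move=> p q r; apply: uniq; apply: LE_E.
    + apply jlub.
      * exact (LE_trans Hps (jub_l p q) (jub_l _ r)).
      * apply jlub; [exact (LE_trans Hps (jub_r p q) (jub_l _ r)) | exact (jub_r _ _)].
    + apply jlub.
      * apply jlub; [exact (jub_l _ _) | exact (LE_trans Hps (jub_l q r) (jub_r p _))].
      * exact (LE_trans Hps (jub_r q r) (jub_r p _)).

pose oppv (p : rep_type Ip) s (a : 'I_(arity s) -> block ps p) : A :=
  if 0 < arity s then op s (fun i => sval (a i))
  else ps s ord0 (op s (fun i => sval (a i))) (sval p).
have oppok : forall p s a, sys_equiv ps (oppv p s a) (sval p).
  move=> p s a; rewrite /oppv; case: ifP => Hn.
  - apply: LE_E.
    + apply (op_lub Hps) => i. exact (E_LE1 (svalP (a i))).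
    + exact (LE_trans Hps (E_LE2 (svalP (a (Ordinal Hn)))) (op_ub Hps _ _ _)).
  - move/negbT: Hn; rewrite -eqn0Ngt => /eqP Hs.
    apply: LE_E.
    + apply (ps_lub Hps); last exact (LE_refl Hps _).
      apply (op_lub Hps) => i. exfalso; exact: ord_empty i Hs.
    + exact (ps_ub_r Hps _ _ _ _).
pose opp p s a : block ps p := exist (fun x => sys_equiv ps x (sval p)) (oppv p s a) (oppok p s a).
have xiok : forall (p q : rep_type Ip) s i (a : block ps p), sl_le j p q ->
    sys_equiv ps (ps s i (sval a) (sval q)) (sval q).
  move=> p q s i a H; apply: LE_E.
  - apply (ps_lub Hps); last exact (LE_refl Hps _).
    exact (LE_trans Hps (E_LE1 (svalP a)) (slLE1 _ _ H)).
  - exact (ps_ub_r Hps _ _ _ _).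
pose xi (p q : rep_type Ip) s i (a : block ps p) : block ps q :=
  match excluded_middle_informative (sl_le j p q) with
  | left H => exist (fun x => sys_equiv ps x (sval q)) (ps s i (sval a) (sval q)) (xiok p q s i a H)
  | right _ => exist (fun x => sys_equiv ps x (sval q)) (sval q) (Erefl _) end.
have xival : forall p q s i a, sl_le j p q -> sval (xi p q s i a) = ps s i (sval a) (sval q).
  move=> p q s i a H; rewrite /xi; by case: excluded_middle_informative.
have eqR : forall s i x y y', sys_equiv ps y y' -> ps s i x y = ps s i x y'.
  move=> s i x y y' H; case: (H s i) => H1 H2; exact (eq_right (Hband s i) x y y' H1 H2).
have joinE : forall p q s i, sl_le j p q -> sys_equiv ps (ps s i (sval p) (sval q)) (sval q).
  move=> p q s i H; apply: LE_E.
  - apply (ps_lub Hps); [exact (slLE1 _ _ H) | exact (LE_refl Hps _)].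
  - exact (ps_ub_r Hps _ _ _ _).
have blk_eq : forall (p : rep_type Ip) (x y : block ps p), sval x = sval y -> x = y.
  intros p0 x0 y0 e. destruct x0 as [x Hx]. destruct y0 as [y Hy]. simpl in e. subst y.
  by rewrite (proof_irrelevance _ Hx Hy).
have sigT_eq : forall (p q : rep_type Ip) (e : p = q) (x : block ps p) (y : block ps q),
    sval x = sval y -> existT (fun r : rep_type Ip => block ps r) p x = existT (fun r : rep_type Ip => block ps r) q y.
  move=> p q e; subst q => x y H; by rewrite (blk_eq _ _ _ H).
have mm : forall p q, sl_le j p q -> metamorphism (opp p) (opp q) (xi p q).
  move=> p q H s a; apply: blk_eq; rewrite xival //= /oppv. case: ifP => Hn.
  - have [_ _ H4 _] := Hps. rewrite H4 //. congr (op s _).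
    apply: functional_extensionality => i; by rewrite xival.
  - move/negbT: Hn; rewrite -eqn0Ngt => /eqP Hs.
    rewrite -(lnb_assoc (Hband s ord0)) (eqR _ _ _ _ _ (joinE _ _ _ _ H)).
    congr (ps s ord0 (op s _) _); apply: functional_extensionality => i.
    exfalso; exact: ord_empty i Hs.
exists j; split; first exact jspec.
exists opp; split.
  move=> p s a Hn; by rewrite /= /oppv Hn.
split.
  move=> p s a Hs; rewrite /= /oppv; case: ifP => // Hn; exfalso; by rewrite Hs in Hn.
exists xi; split; first exact xival.
split; first exact mm.
split.
  split.
  - exact joinsl.
  - exact mm.
  - move=> p s i a; apply: blk_eq; rewrite xival; last exact (slLE2 _ _ (LE_refl Hps _)).
    by case: (svalP a s i).
  - move=> p q r s i a Hpq Hqr.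
    have Hpr : sl_le j p r := slLE2 _ _ (LE_trans Hps (slLE1 _ _ Hpq) (slLE1 _ _ Hqr)).
    apply: blk_eq; rewrite !xival //.
    rewrite -(lnb_assoc (Hband s i)). exact: eqR (joinE _ _ _ _ Hqr).

pose BT := fun r : rep_type Ip => block ps r.
pose opS : ops tau {p : rep_type Ip & block ps p} := fun s a =>
  match [seq tag (a i) | i <- enum 'I_(arity s)] with
  | p0 :: rest => existT BT (foldl j p0 rest)
      (opp (foldl j p0 rest) s (fun i => xi (tag (a i)) (foldl j p0 rest) s (lift ord0 i) (tagged (a i))))
  | [::] => existT BT (rep (op s (fun i => sval (tagged (a i)))))
      (opp (rep (op s (fun i => sval (tagged (a i))))) s
         (fun i => xi (tag (a i)) (rep (op s (fun i => sval (tagged (a i))))) s (lift ord0 i) (tagged (a i))))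
  end.
have foldl_j : forall l (p0 : rep_type Ip) z,
    LE ps (sval (foldl j p0 l)) z <-> LE ps (sval p0) z /\ Pall (fun x => LE ps (sval x) z) l.
  elim=> [|x l IH] p0 z /=; first by tauto.
  split.
  - move/IH => [Hbx Hl]; split; [|split].
    + exact (LE_trans Hps (jub_l _ _) Hbx).
    + exact (LE_trans Hps (jub_r _ _) Hbx).
    + exact Hl.
  - move=> [Hb [Hx Hl]]; apply/IH; split => //; exact (jlub _ _ _ Hb Hx).
exists opS; split.
  split.
  - move=> s a p0 rest Hl. by rewrite /opS Hl.
  - move=> s Hs.
    pose f0 : 'I_(arity s) -> A := fun i => match ord_empty i Hs with end.
    exists (rep (op s f0)); split.
    + move=> p; apply: slLE2.
      apply (LE_trans Hps (E_LE1 (rep_spec _))). apply (op_lub Hps) => i.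
      exfalso; exact: ord_empty i Hs.
    + move=> a.
      have Hl : [seq tag (a i) | i <- enum 'I_(arity s)] = [::].
        by apply: size0nil; rewrite size_map size_enum_ord Hs.
      rewrite /opS Hl.
      have -> : (fun i => sval (tagged (a i))) = f0.
        apply: functional_extensionality => i; exfalso; exact: ord_empty i Hs.
      by [].
pose h (a : A) : {p : rep_type Ip & block ps p} :=
  existT BT (rep a) (exist (fun x => sys_equiv ps x (sval (rep a))) a (Esym _ _ (rep_spec a))).
exists h; split; [|split].
- exists (fun x : {p : rep_type Ip & block ps p} => sval (tagged x)); first by [].
  move=> [p [b Hb]] /=.
  have e : rep b = p by apply: uniq; exact: Etrans (rep_spec b) Hb.
  exact: (sigT_eq _ _ e).
- by [].
- move=> s a.
  rewrite /opS.
  case Hn: (0 < arity s).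
  + have [p0 [rest Hl]] : exists p0 rest,
        [seq tag (h (a i)) | i <- enum 'I_(arity s)] = p0 :: rest.
      case E: [seq tag (h (a i)) | i <- enum 'I_(arity s)] => [|p0 rest]; last by exists p0, rest.
      exfalso; move: (congr1 size E); rewrite size_map size_enum_ord => Hs; by rewrite Hs in Hn.
    rewrite Hl.
    set J := foldl j p0 rest.
    have LEJ : forall z, LE ps (sval J) z <-> forall i, LE ps (a i) z.
      move=> z; rewrite /J; split.
      - move/foldl_j => HH i.
        have : Pall (fun x => LE ps (sval x) z) (p0::rest) := HH.
        rewrite -Hl => /Pall_map H.
        exact (LE_trans Hps (E_LE2 (rep_spec (a i))) (H i (mem_enum _ i))).
      - move=> H; apply/foldl_j.
        have : Pall (fun x => LE ps (sval x) z) (p0::rest).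
          rewrite -Hl; apply/Pall_map => i _.
          exact (LE_trans Hps (E_LE1 (rep_spec (a i))) (H i)).
        by [].
    have EcJ : sys_equiv ps (op s a) (sval J).
      apply: LE_E.
      - apply (op_lub Hps) => i. exact (proj1 (LEJ _) (LE_refl Hps _) i).
      - apply (proj2 (LEJ _)) => i; exact (op_ub Hps _ _ _).
    have e : rep (op s a) = J by apply: uniq; exact: Etrans (rep_spec _) EcJ.
    apply: (sigT_eq _ _ e). rewrite /= /oppv Hn.
    have [_ _ H4 _] := Hps.
    transitivity (op s (fun i => ps s (lift ord0 i) (a i) (sval J))).
    * rewrite -H4 //. case: (EcJ s ord0) => _ H2. by rewrite H2.
    * congr (op s _); apply: functional_extensionality => i.
      rewrite xival; first by [].
      apply: slLE2.
      exact (LE_trans Hps (E_LE1 (rep_spec (a i))) (proj1 (LEJ _) (LE_refl Hps _) i)).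
  + move/negbT: Hn; rewrite -eqn0Ngt => /eqP Hs.
    have Hl : [seq tag (h (a i)) | i <- enum 'I_(arity s)] = [::].
      by apply: size0nil; rewrite size_map size_enum_ord Hs.
    rewrite Hl.
    have Ea : (fun i => sval (tagged (h (a i)))) = a by apply: functional_extensionality.
    rewrite Ea.
    apply: (sigT_eq _ _ erefl). rewrite /= /oppv.
    case: ifP => Hn; first by rewrite Hs in Hn.
    have -> : op s (fun i => sval (xi (tag (h (a i))) (rep (op s a)) s (lift ord0 i) (tagged (h (a i))))) = op s a.
      congr (op s _); apply: functional_extensionality => i; exfalso; exact: ord_empty i Hs.
    case: (rep_spec (op s a) s ord0) => H1 _. by rewrite H1.
Qed.
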